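(* Let $R$ be a commutative ring and let $M$ be a GV-torsionfree $w$-projective $R$-module. Then $M$ is $w$-split if and only if there is $J\in\mathrm{GV}(R)$ with $JM_w\subseteq M$.
   Context: $R$ is a commutative ring with identity. For an $R$-module $M$ and $s\in R$, $\eta^M_s:M\to M$ is multiplication by $s$. GV-ideals and torsion: - An ideal $J$ of $R$ is a GV-ideal if $J$ is finitely generated and the natural map $R\to\mathrm{Hom}_R(J,R)$ is an isomorphism. $\mathrm{GV}(R)$ is the set of GV-ideals. - $\mathrm{tor_{GV}}(M)=\{x\in M: Jx=0\text{ for some }J\in\mathrm{GV}(R)\}$. - $M$ is GV-torsion if $\mathrm{tor_{GV}}(M)=M$, and GV-torsionfree if $\mathrm{tor_{GV}}(M)=0$. $w$-modules and $w$-projectivity: - A GV-torsionfree $M$ is a $w$-module if $\mathrm{Ext}^1_R(R/J,M)=0$ for all $J\in\mathrm{GV}(R)$. - For GV-torsionfree $M$, $M_w=\{x\in E(M): Jx\subseteq M\text{ for some }J\in\mathrm{GV}(R)\}$, where $E(M)$ is the injective envelope. - $M$ is $w$-projective if $\mathrm{Ext}^1_R(L(M),N)$ is GV-torsion for every torsionfree $w$-module $N$, where $L(M)=(M/\mathrm{tor_{GV}}(M))_w$. $w$-split: - A short exact sequence $0\to A\xrightarrow{f}B\xrightarrow{g}C\to 0$ is $w$-split if there exist $J=\langle d_1,\dots,d_n\rangle\in\mathrm{GV}(R)$ and $h_1,\dots,h_n\in\mathrm{Hom}_R(C,B)$ with $gh_k=\eta^C_{d_k}$ for all $k$. - $M$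 is $w$-split if there is a $w$-split exact sequence $0\to K\to P\to M\to 0$ with $P$ projective. *)

(* Defs.v *)
From HB Require Import structures.
From mathcomp Require Import all_boot all_order all_algebra.
Set Implicit Arguments. Unset Strict Implicit. Unset Printing Implicit Defensive.
Import GRing.Theory.
Local Open Scope ring_scope.

Section GVDefs.
Variable R : comPzRingType.

Definition ideal_gen (ds : seq R) (x : R) : Prop :=
  exists c : 'I_(size ds) -> R, x = \sum_(i < size ds) c i * ds`_i.

(* J = <ds> is a GV-ideal: the natural map R -> Hom_R(J,R), r |-> (x |-> r x),
   is injective and surjective. *)
Definition GV (ds : seq R) : Prop :=
  (forall r : R, (forall x, ideal_gen ds x -> r * x = 0) -> r = 0) /\
  (forall f : R -> R,
      (forall x y, ideal_gen ds x -> ideal_gen ds y -> f (x + y) = f x + f y) ->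
      (forall a x, ideal_gen ds x -> f (a * x) = a * f x) ->
      exists r : R, forall x, ideal_gen ds x -> f x = r * x).

Definition tor_GV (M : lmodType R) (x : M) : Prop :=
  exists ds, GV ds /\ forall a, ideal_gen ds a -> a *: x = 0.

Definition GV_torsion (M : lmodType R) : Prop := forall x : M, tor_GV x.
Definition GV_torsionfree (M : lmodType R) : Prop :=
  forall x : M, tor_GV x -> x = 0.

Definition submodule (E : lmodType R) (N : E -> Prop) : Prop :=
  N 0 /\ (forall x y, N x -> N y -> N (x + y)) /\ (forall a x, N x -> N (a *: x)).

Definition injective_module (E : lmodType R) : Prop :=
  forall (A B : lmodType R) (f : {linear A -> B}) (g : {linear A -> E}),
    injective f -> exists h : {linear B -> E}, forall a, h (f a) = g a.

Definition projective_module (P : lmodType R) : Prop :=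
  forall (A B : lmodType R) (g : {linear A -> B}) (f : {linear P -> B}),
    (forall b, exists a, g a = b) -> exists h : {linear P -> A}, forall p, g (h p) = f p.

Definition injective_envelope (M E : lmodType R) (iota : {linear M -> E}) : Prop :=
  injective iota /\ injective_module E /\
  (forall N : E -> Prop, submodule N -> (exists x, N x /\ x <> 0) ->
     exists m, N (iota m) /\ iota m <> 0).

Definition Mw (M E : lmodType R) (iota : {linear M -> E}) (x : E) : Prop :=
  exists ds, GV ds /\ forall a, ideal_gen ds a -> exists m, a *: x = iota m.

Definition short_exact (A B C : lmodType R) (f : {linear A -> B}) (g : {linear B -> C})
  : Prop :=
  injective f /\ (forall c, exists b, g b = c) /\
  (forall b, g b = 0 <-> exists a, f a = b).

Definition Ext1_zero (C A : lmodType R) : Prop :=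
  forall (B : lmodType R) (f : {linear A -> B}) (g : {linear B -> C}),
    short_exact f g -> exists h : {linear C -> B}, forall c, g (h c) = c.

(* Ext^1_R(C, A) is GV-torsion: every Yoneda extension class xi is annihilated
   by some GV-ideal J = <d_1..d_n>; d * xi = xi . eta_d is zero iff eta_d lifts
   through g. *)
Definition Ext1_GV_torsion (C A : lmodType R) : Prop :=
  forall (B : lmodType R) (f : {linear A -> B}) (g : {linear B -> C}),
    short_exact f g ->
    exists ds, GV ds /\ forall i : 'I_(size ds),
      exists h : {linear C -> B}, forall c, g (h c) = ds`_i *: c.

(* w-module: GV-torsionfree and Ext^1(R/J, N) = 0 for all GV-ideals J;
   R/J is represented by any module Q with a surjection R -> Q of kernel J. *)
Definition w_module (N : lmodType R) : Prop :=
  GV_torsionfree N /\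
  forall ds, GV ds ->
    forall (Q : lmodType R) (pi : {linear R^o -> Q}),
      (forall q, exists r, pi r = q) -> (forall r, pi r = 0 <-> ideal_gen ds r) ->
      Ext1_zero Q N.

(* Since tor_GV(M) = 0, L(M) = (M/tor_GV(M))_w = M_w; L(M) is represented by any
   module L with a monomorphism L -> E whose image is exactly M_w. *)
Definition w_projective (M E : lmodType R) (iota : {linear M -> E}) : Prop :=
  forall (L : lmodType R) (phi : {linear L -> E}),
    injective phi -> (forall y, Mw iota y <-> exists l, phi l = y) ->
    forall N : lmodType R, GV_torsionfree N -> w_module N -> Ext1_GV_torsion L N.

Definition w_split_seq (A B C : lmodType R) (f : {linear A -> B}) (g : {linear B -> C})
  : Prop :=
  short_exact f g /\
  exists ds, GV ds /\ forall i : 'I_(size ds),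
    exists h : {linear C -> B}, forall c, g (h c) = ds`_i *: c.

Definition w_split (M : lmodType R) : Prop :=
  exists (K P : lmodType R) (f : {linear K -> P}) (g : {linear P -> M}),
    projective_module P /\ w_split_seq f g.

End GVDefs.

(* Main.v *)
Require Import Defs.
From HB Require Import structures.
From mathcomp Require Import all_boot all_order all_algebra.
From mathcomp Require Import finmap.
From mathcomp.multinomials Require Import monalg.
From Stdlib Require Import ClassicalEpsilon.
Set Implicit Arguments. Unset Strict Implicit. Unset Printing Implicit Defensive.
Import GRing.Theory.
Local Open Scope fset_scope.
Local Open Scope ring_scope.
Section Ideals.
Variable R : comPzRingType.
Implicit Types (ds es : seq R) (a b r x y : R).

Lemma ig0 ds : ideal_gen ds 0.
Proof. by exists (fun _ => 0); rewrite big1 // => i _; rewrite mul0r. Qed.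
Lemma igD ds x y : ideal_gen ds x -> ideal_gen ds y -> ideal_gen ds (x + y).
Proof.
move=> [c ->] [d ->]; exists (fun i => c i + d i).
by rewrite -big_split; apply: eq_bigr => i _; rewrite mulrDl.
Qed.
Lemma igM ds r x : ideal_gen ds x -> ideal_gen ds (r * x).
Proof.
move=> [c ->]; exists (fun i => r * c i).
by rewrite mulr_sumr; apply: eq_bigr => i _; rewrite mulrA.
Qed.
Lemma ig_nth ds (i : 'I_(size ds)) : ideal_gen ds ds`_i.
Proof.
exists (fun j => (j == i)%:R); rewrite (bigD1 i) //= eqxx mul1r big1 ?addr0 //.
by move=> j /negbTE ->; rewrite mul0r.
Qed.
Lemma ig_mem ds x : x \in ds -> ideal_gen ds x.
Proof.
move=> xs; have ilt : (seq.index x ds < size ds)%N by rewrite index_mem.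
by have := ig_nth (Ordinal ilt); rewrite /= nth_index.
Qed.
Lemma ig_ind ds (P : R -> Prop) : P 0 -> (forall x y, P x -> P y -> P (x + y)) ->
  (forall r x, P x -> P (r * x)) -> (forall i : 'I_(size ds), P ds`_i) ->
  forall x, ideal_gen ds x -> P x.
Proof.
move=> P0 PD PM Pg x [c ->]; elim/big_ind: _ => // i _; exact: PM.
Qed.

Lemma GV_inj ds r : GV ds -> (forall x, ideal_gen ds x -> r * x = 0) -> r = 0.
Proof. by case=> h _; apply: h. Qed.

Lemma GV_1 : GV [:: (1 : R)].
Proof.
split.
  by move=> r h; rewrite -[r]mulr1; apply: h; apply: ig_mem; rewrite inE.
move=> f fD fM; exists (f 1) => x _.
by rewrite -[x]mulr1 fM; [rewrite mulr1 mulrC | apply: ig_mem; rewrite inE].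
Qed.

Definition pl es ds := [seq x * y | x <- es, y <- ds].

Lemma pl_gen es ds x y : ideal_gen es x -> ideal_gen ds y -> ideal_gen (pl es ds) (x * y).
Proof.
move=> hx hy; move: x hx; apply: ig_ind.
- by rewrite mul0r; apply: ig0.
- by move=> a b ha hb; rewrite mulrDl; apply: igD.
- by move=> r a ha; rewrite -mulrA; apply: igM.
move=> i; move: y hy; apply: ig_ind.
- by rewrite mulr0; apply: ig0.
- by move=> a b ha hb; rewrite mulrDr; apply: igD.
- by move=> r a ha; rewrite mulrCA; apply: igM.
move=> j; apply: ig_mem; apply: allpairs_f; exact: mem_nth.
Qed.

Lemma pl_nth es ds (k : 'I_(size (pl es ds))) :
  exists i : 'I_(size es), exists j : 'I_(size ds), (pl es ds)`_k = es`_i * ds`_j.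
Proof.
have : (pl es ds)`_k \in pl es ds by apply: mem_nth.
case/allpairsP => [[x y] /= [xs ys ->]].
have ix : (seq.index x es < size es)%N by rewrite index_mem.
have iy : (seq.index y ds < size ds)%N by rewrite index_mem.
by exists (Ordinal ix), (Ordinal iy); rewrite /= !nth_index.
Qed.

Lemma GV_mul es ds : GV es -> GV ds -> GV (pl es ds).
Proof.
move=> He Hd; split.
  move=> r h; apply: (GV_inj He) => a ha; apply: (GV_inj Hd) => b hb.
  by rewrite -mulrA; apply: h; apply: pl_gen.
move=> f fD fM.
have H a : exists r, ideal_gen es a -> forall b, ideal_gen ds b -> f (a * b) = r * b.
  case: (excluded_middle_informative (ideal_gen es a)) => ha; last by exists 0.
  have [r hr] : exists r, forall b, ideal_gen ds b -> f (a * b) = r * b.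
    apply: (Hd.2 (fun b => f (a * b))).
    - by move=> x y hx hy; rewrite mulrDr fD //; apply: pl_gen.
    - by move=> c x hx; rewrite mulrCA (fM c (a * x)) //; apply: pl_gen.
  by exists r => _.
pose G a := proj1_sig (constructive_indefinite_description _ (H a)).
have HG a : ideal_gen es a -> forall b, ideal_gen ds b -> f (a * b) = G a * b.
  exact: (proj2_sig (constructive_indefinite_description _ (H a))).
have [r hr] : exists r, forall x, ideal_gen es x -> G x = r * x.
apply: (He.2 G).
- move=> x y hx hy; apply/eqP; rewrite -subr_eq0; apply/eqP.
  have hxy := igD hx hy.
  apply: (GV_inj Hd) => b hb; rewrite mulrBl mulrDl -!HG //.
  by rewrite mulrDl fD ?subrr //; apply: pl_gen.
- move=> c x hx; apply/eqP; rewrite -subr_eq0; apply/eqP.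
  have hcx := igM c hx.
  apply: (GV_inj Hd) => b hb; rewrite mulrBl -mulrA -!HG //.
  by rewrite -mulrA fM ?subrr //; apply: pl_gen.
exists r.
have key : forall x, ideal_gen (pl es ds) x -> ideal_gen (pl es ds) x /\ f x = r * x.
  apply: ig_ind.
  - split; first exact: ig0.
    by rewrite -[0](mulr0 0) fM ?mul0r ?mulr0 //; apply: ig0.
  - by move=> x y [hx ex] [hy ey]; split; [apply: igD | rewrite fD // ex ey mulrDr].
  - by move=> c x [hx ex]; split; [apply: igM | rewrite fM // ex mulrCA].
  move=> k; split; first exact: ig_nth.
  have [i [j ->]] := pl_nth k.
  rewrite HG; [|exact: ig_nth|exact: ig_nth].
  by rewrite hr ?mulrA //; apply: ig_nth.
by move=> x /key [].
Qed.
End Ideals.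
Section Sub.
Variables (R : comPzRingType) (V : lmodType R) (P : V -> Prop) (HP : submodule P).
Definition pb : pred V := fun x => let _ := HP in
  if excluded_middle_informative (P x) then true else false.
Lemma pbP x : reflect (P x) (pb x).
Proof. rewrite /pb; case: excluded_middle_informative => h; constructor => //. Qed.
Lemma pb_closed : subsemimod_closed pb.
Proof.
case: HP => [H0 [HD HZ]]; split; first split.
- exact/pbP.
- by move=> x y /pbP hx /pbP hy; apply/pbP; apply: HD.
- by move=> a x /pbP hx; apply/pbP; apply: HZ.
Qed.
HB.instance Definition _ := GRing.isSubmodClosed.Build R V pb pb_closed.
Record subm := Subm { sval_ : V; _ : pb sval_ }.
HB.instance Definition _ := [isSub for sval_].
HB.instance Definition _ := [Choice of subm by <:].
HB.instance Definition _ := [SubChoice_isSubLmodule of subm by <:].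
Definition subval : {linear subm -> V} := val.
End Sub.
Section Mk.
Variables (R : pzRingType) (A B : lmodType R) (h : A -> B) (H : linear h).
Definition mkfun := h.
HB.instance Definition _ := GRing.isLinear.Build R A B *:%R mkfun H.
Definition mklin : {linear A -> B} := mkfun.
Lemma mklinE x : mklin x = h x. Proof. by []. Qed.
End Mk.

Section Fr.
Context (K : choiceType) (R : pzRingType).
Definition Fr := malg K R.
HB.instance Definition _ := GRing.Zmodule.on Fr.
Definition frscale c (g : Fr) : Fr := \sum_(k <- msupp g) << c * g@_k *g k >>.
Lemma frscaleE c g k : (frscale c g)@_k = c * g@_k.
Proof.
rewrite {2}[g]monalgE !raddf_sum mulr_sumr.
by apply/eq_bigr=> /= i _; rewrite !mcoeffU mulrnAr.
Qed.
Lemma frscaleA c1 c2 g : frscale c1 (frscale c2 g) = frscale (c1 * c2) g.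
Proof. by apply/malgP=> x; rewrite !frscaleE mulrA. Qed.
Lemma frscale1r D: frscale 1 D = D.
Proof. by apply/malgP=> k; rewrite !frscaleE mul1r. Qed.
Lemma frscaleDr c g1 g2 : frscale c (g1 + g2) = frscale c g1 + frscale c g2.
Proof. by apply/malgP=> k; rewrite !(mcoeffD, frscaleE) mulrDr. Qed.
Lemma frscaleDl g c1 c2: frscale (c1 + c2) g = frscale c1 g + frscale c2 g.
Proof. by apply/malgP=> x; rewrite !(mcoeffD, frscaleE) mulrDl. Qed.
HB.instance Definition _ := GRing.Zmodule_isLmodule.Build R Fr
  frscaleA frscale1r frscaleDr frscaleDl.
Lemma frZ c (g : Fr) k : (c *: g)@_k = c * g@_k.
Proof. exact: frscaleE. Qed.
Definition bas (k : K) : Fr := << 1 *g k >>.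
End Fr.

Section Ext.
Context (R : pzRingType) (K : choiceType) (V : lmodType R) (u : K -> V).
Definition extf (g : Fr K R) : V := \sum_(k <- msupp g) g@_k *: u k.
Lemma extfw (g : Fr K R) (D : {fset K}) : msupp g `<=` D ->
  extf g = \sum_(k <- D) g@_k *: u k.
Proof.
move=> sub; rewrite /extf; apply: big_fset_incl => // k _ kn.
by rewrite mcoeff_outdom // scale0r.
Qed.
Lemma extf_lin : linear extf.
Proof.
move=> c g1 g2.
set D := msupp g1 `|` msupp g2 `|` msupp (c *: g1 + g2).
rewrite (@extfw _ D) ?fsubsetUr // (@extfw g1 D); last first.
  by apply: fsubset_trans (fsubsetUl _ _); apply: fsubsetUl.
rewrite (@extfw g2 D); last first.
  by apply: fsubset_trans (fsubsetUl _ _); apply: fsubsetUr.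
rewrite scaler_sumr -big_split /=; apply: eq_bigr => k _.
by rewrite mcoeffD frZ scalerDl scalerA.
Qed.
Definition ext : {linear Fr K R -> V} := mklin extf_lin.
Lemma ext_bas k : ext (bas R k) = u k.
Proof.
rewrite mklinE (@extfw _ [fset k]); last by rewrite /bas msuppU; case: eqP => _; rewrite ?fsub0set ?fsubset_refl.
by rewrite big_seq_fset1 mcoeffUU scale1r.
Qed.
End Ext.
Section Tors.
Variable R : comPzRingType.

Lemma E_tf (M E : lmodType R) (iota : {linear M -> E}) :
  injective_envelope iota -> GV_torsionfree M -> GV_torsionfree E.
Proof.
move=> [iinj [_ ess]] Mtf x [ds [Hds hx]].
case: (eqVneq x 0) => // nx; exfalso.
have [m [[r er] nm]] : exists m, (fun y => exists r, y = r *: x) (iota m) /\ iota m <> 0.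
  apply: (ess (fun y => exists r, y = r *: x)); last by exists x; split; [exists 1; rewrite scale1r | apply/eqP].
  split; first by exists 0; rewrite scale0r.
  split; first by move=> _ _ [a ->] [b ->]; exists (a + b); rewrite scalerDl.
  by move=> c _ [a ->]; exists (c * a); rewrite scalerA.
apply: nm; suff -> : m = 0 by rewrite linear0.
apply: Mtf; exists ds; split => // a ha; apply: iinj.
by rewrite linearZ /= er linear0 scalerA mulrC -scalerA hx // scaler0.
Qed.

Lemma tf_inj (L V : lmodType R) (phi : {linear L -> V}) :
  injective phi -> GV_torsionfree V -> GV_torsionfree L.
Proof.
move=> pinj Vtf x [ds [Hds hx]]; apply: pinj; rewrite linear0; apply: Vtf.
by exists ds; split => // a ha; rewrite -linearZ hx // linear0.
Qed.

Lemma Fr_tf (K : choiceType) : GV_torsionfree (Fr K R).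
Proof.
move=> x [ds [Hds hx]]; apply/malgP => k; rewrite mcoeff0.
apply: (GV_inj Hds) => a ha; rewrite mulrC -frZ hx //; exact: mcoeff0.
Qed.

Lemma foldr_sub (K : choiceType) (s : seq {fset K}) A :
  A \in s -> A `<=` foldr fsetU fset0 s.
Proof.
elim: s => //= B s IH; rewrite inE => /orP [/eqP -> | /IH h]; first exact: fsubsetUl.
exact: fsubset_trans h (fsubsetUr _ _).
Qed.

Lemma Fr_ext (K : choiceType) (ds : seq R) (phi : R -> Fr K R) : GV ds ->
  (forall x y, ideal_gen ds x -> ideal_gen ds y -> phi (x + y) = phi x + phi y) ->
  (forall a x, ideal_gen ds x -> phi (a * x) = a *: phi x) ->
  exists v, forall a, ideal_gen ds a -> phi a = a *: v.
Proof.
move=> Hds pD pM.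
have Hk k : exists r, forall a, ideal_gen ds a -> (phi a)@_k = r * a.
  apply: (Hds.2 (fun a => (phi a)@_k)).
  - by move=> x y hx hy; rewrite pD // mcoeffD.
  - by move=> c x hx; rewrite pM // frZ.
pose r k := proj1_sig (constructive_indefinite_description _ (Hk k)).
have hr k : forall a, ideal_gen ds a -> (phi a)@_k = r k * a.
  exact: (proj2_sig (constructive_indefinite_description _ (Hk k))).
pose S := foldr fsetU fset0 [seq msupp (phi d) | d <- ds].
have Sout k : k \notin S -> forall a, ideal_gen ds a -> (phi a)@_k = 0.
  move=> kS; suff H : forall a, ideal_gen ds a -> ideal_gen ds a /\ (phi a)@_k = 0.
    by move=> a /H [].
  apply: ig_ind.
  - split; first exact: ig0.
    have p0 : phi 0 = 0 by rewrite -{1}(mulr0 0) pM ?scale0r //; exact: ig0.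
    by rewrite p0 mcoeff0.
  - by move=> x y [hx ex] [hy ey]; split; [apply: igD | rewrite pD // mcoeffD ex ey addr0].
  - by move=> c x [hx ex]; split; [apply: igM | rewrite pM // frZ ex mulr0].
  move=> i; split; first exact: ig_nth.
  apply: mcoeff_outdom; apply: contra kS => kin.
  have : msupp (phi ds`_i) `<=` S.
    by apply: foldr_sub; apply: map_f; apply: mem_nth.
  by move/fsubsetP; apply.
have r0 k : k \notin S -> r k = 0.
  move=> kS; apply: (GV_inj Hds) => a ha; rewrite -hr //; exact: Sout.
exists ([malg k in S => r k] : Fr K R) => a ha; apply/malgP => k.
rewrite frZ mcoeffE hr //; case: ifP => [_|/negbT kS]; first by rewrite mulrC.
by rewrite r0 // mulr0 mul0r.
Qed.

Lemma ext_comp (K : choiceType) (V W : lmodType R) (u : K -> V) (l : {linear V -> W}) g :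
  l (ext u g) = ext (fun k => l (u k)) g.
Proof.
by rewrite !mklinE /extf linear_sum; apply: eq_bigr => k _; rewrite linearZ.
Qed.

Lemma ext_eq (K : choiceType) (V : lmodType R) (u u' : K -> V) g :
  (forall k, u k = u' k) -> ext u g = ext u' g.
Proof. by move=> h; rewrite !mklinE /extf; apply: eq_bigr => k _; rewrite h. Qed.

End Tors.
Section More.
Variable R : comPzRingType.

Lemma kerP (A B : lmodType R) (g : {linear A -> B}) : submodule (fun x => g x = 0).
Proof.
split; first exact: linear0.
split; first by move=> x y hx hy; rewrite linearD hx hy addr0.
by move=> a x hx; rewrite linearZ /= hx scaler0.
Qed.

Lemma ker_exact (A B : lmodType R) (g : {linear A -> B}) :
  (forall b, exists a, g a = b) -> short_exact (subval (kerP g)) g.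
Proof.
move=> gs; split; first exact: val_inj.
split => // b; split.
  by move=> gb; exists (Subm (HP := kerP g) (introT (pbP _ b) gb)).
by case=> a <-; apply/(pbP (kerP g)); exact: valP.
Qed.

Lemma ext_bas_id (K : choiceType) (g : Fr K R) : ext (@bas K R) g = g.
Proof.
rewrite mklinE /extf; rewrite [RHS](monalgE g); apply: eq_bigr => k _.
apply/malgP => k'; rewrite frZ /bas !mcoeffU.
by case: eqP => _; rewrite ?mulr1 ?mulr0.
Qed.

Lemma ext_scale (K : choiceType) (V : lmodType R) (u : K -> V) c g :
  ext (fun k => c *: u k) g = c *: ext u g.
Proof.
rewrite !mklinE /extf scaler_sumr; apply: eq_bigr => k _.
by rewrite !scalerA mulrC.
Qed.

Lemma Fr_proj (K : choiceType) : projective_module (Fr K R).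
Proof.
move=> A B g f gs.
have H t : exists a, g a = f (bas R t) by apply: gs.
pose a t := proj1_sig (constructive_indefinite_description _ (H t)).
have ha t : g (a t) = f (bas R t) := proj2_sig (constructive_indefinite_description _ (H t)).
exists (ext a) => p.
by rewrite ext_comp (ext_eq _ ha) -ext_comp ext_bas_id.
Qed.

Lemma ig_closed (M E : lmodType R) (iota : {linear M -> E}) ds x :
  (forall i : 'I_(size ds), exists m, ds`_i *: x = iota m) ->
  forall a, ideal_gen ds a -> exists m, a *: x = iota m.
Proof.
move=> h; apply: ig_ind => //.
- by exists 0; rewrite scale0r linear0.
- by move=> a b [m1 e1] [m2 e2]; exists (m1 + m2); rewrite scalerDl e1 e2 linearD.
- by move=> r a [m e]; exists (r *: m); rewrite -scalerA e linearZ.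
Qed.

End More.
Section WMod.
Variable R : comPzRingType.

Lemma ker_wmod (T : choiceType) (L : lmodType R) (g' : {linear Fr T R -> L}) :
  GV_torsionfree L -> w_module (subm (kerP g')).
Proof.
move=> Ltf; have Ntf : GV_torsionfree (subm (kerP g')).
  exact: (tf_inj (phi := subval (kerP g')) val_inj (@Fr_tf R T)).
split => // ds Hds Q pi pis piker B f0 g0 [f0inj [g0s g0ex]].
have piZ (c x : R) : pi (c * x) = c *: pi x by exact: (linearZ_LR pi c (x : R^o)).
have [b gb] := g0s (pi 1).
have H a : exists n, ideal_gen ds a -> f0 n = a *: b.
  case: (excluded_middle_informative (ideal_gen ds a)) => ha; last by exists 0.
  have [n hn] : exists n, f0 n = a *: b.
    apply/g0ex; rewrite linearZ /= gb -piZ mulr1; exact/piker.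
  by exists n.
pose n a := proj1_sig (constructive_indefinite_description _ (H a)).
have hn a : ideal_gen ds a -> f0 (n a) = a *: b :=
  proj2_sig (constructive_indefinite_description _ (H a)).
have [v hv] : exists v, forall a, ideal_gen ds a -> val (n a) = a *: v.
  apply: (Fr_ext Hds).
  - move=> x y hx hy.
    suff -> : n (x + y) = n x + n y by exact: (linearD (subval (kerP g'))).
    by apply: f0inj; rewrite linearD /= !hn ?scalerDl //; apply: igD.
  - move=> c x hx.
    suff -> : n (c * x) = c *: n x by exact: (linearZZ (subval (kerP g'))).
    by apply: f0inj; rewrite linearZ /= !hn ?scalerA //; apply: igM.
have gv : g' v = 0.
  apply: Ltf; exists ds; split => // a ha.
  rewrite -linearZ /= -hv //; exact/(pbP (kerP g'))/valP.
pose nv := Subm (HP := kerP g') (introT (pbP _ v) gv).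
pose b' := b - f0 nv.
have hb' a : ideal_gen ds a -> a *: b' = 0.
  move=> ha; rewrite scalerBr -hn // -linearZ /=; apply/eqP; rewrite subr_eq0; apply/eqP.
  suff -> : n a = a *: nv by [].
  apply: val_inj; rewrite hv //.
have Hr q : exists r, pi r = q by apply: pis.
pose r q := proj1_sig (constructive_indefinite_description _ (Hr q)).
have hr q : pi (r q) = q := proj2_sig (constructive_indefinite_description _ (Hr q)).
have g0f0 x : g0 (f0 x) = 0 by apply/g0ex; exists x.
have hlin : linear (fun q => r q *: b').
  move=> c q q'.
  have d0 : ideal_gen ds (r (c *: q + q') - (c * r q + r q')).
    apply/piker; rewrite linearB linearD /= piZ !hr subrr //.
  apply/eqP; rewrite scalerA -scalerDl -subr_eq0 -scalerBl hb' //.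
exists (mklin hlin) => q; rewrite mklinE linearZ /= linearB /= g0f0 subr0 gb.
by rewrite -piZ mulr1 hr.
Qed.

End WMod.
Section Fwd.
Variable R : comPzRingType.

Lemma idlin_proof (P : lmodType R) : linear (fun p : P => p).
Proof. by []. Qed.

Lemma forward (M E : lmodType R) (iota : {linear M -> E}) :
  injective_envelope iota -> GV_torsionfree M -> w_split M ->
  exists ds : seq R, GV ds /\
     forall x : E, Mw iota x -> forall a : R, ideal_gen ds a -> exists m : M, a *: x = iota m.
Proof.
move=> env Mtf [K [P [f [g [Pproj [[finj [gsurj gex]] [ds [Hds hh]]]]]]]].
have Etf := E_tf env Mtf; have iinj := env.1.
exists ds; split => // x [es [Hes hx]]; apply: ig_closed => i.
have [h hg] := hh i.
have [s hs] := Pproj _ _ (ext (fun p : P => p)) (mklin (@idlin_proof P))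
  (fun p => ex_intro _ (bas R p) (ext_bas _ p)).
have H a : exists m, ideal_gen es a -> a *: x = iota m.
  case: (excluded_middle_informative (ideal_gen es a)) => ha; last by exists 0.
  by have [m hm] := hx a ha; exists m.
pose mm a := proj1_sig (constructive_indefinite_description _ (H a)).
have hm a : ideal_gen es a -> a *: x = iota (mm a) :=
  proj2_sig (constructive_indefinite_description _ (H a)).
have [v hv] : exists v, forall a, ideal_gen es a -> s (h (mm a)) = a *: v.
  apply: (Fr_ext Hes).
  - move=> a b ha hb.
    suff -> : mm (a + b) = mm a + mm b by rewrite !linearD.
    by apply: iinj; rewrite linearD /= -!hm ?scalerDl //; apply: igD.
  - move=> c a ha.
    suff -> : mm (c * a) = c *: mm a by rewrite !linearZ.
    by apply: iinj; rewrite linearZ /= -!hm ?scalerA //; apply: igM.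
pose p := ext (fun p : P => p) v.
have hp a : ideal_gen es a -> h (mm a) = a *: p.
  move=> ha; rewrite -[LHS]hs mklinE hv //; exact: (linearZZ (ext (fun p : P => p)) a v).
exists (g p); apply/eqP; rewrite -subr_eq0; apply/eqP; apply: Etf.
exists es; split => // a ha.
rewrite scalerBr scalerA mulrC -scalerA hm // -[a *: iota (g p)](linearZZ iota) -[a *: g p](linearZZ g) -hp // hg.
by rewrite (linearZZ iota) subrr.
Qed.

End Fwd.
Section Bwd.
Variable R : comPzRingType.

Lemma Mw_sub (M E : lmodType R) (iota : {linear M -> E}) : submodule (Mw iota).
Proof.
split.
  exists [:: 1]; split; first exact: GV_1.
  by move=> a _; exists 0; rewrite scaler0 linear0.
split.
  move=> x y [d1 [H1 h1]] [d2 [H2 h2]]; exists (pl d1 d2); split; first exact: GV_mul.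
  apply: ig_closed => k; have [i [j ->]] := pl_nth k.
  have [m1 e1] := h1 _ (ig_nth i); have [m2 e2] := h2 _ (ig_nth j).
  exists (d2`_j *: m1 + d1`_i *: m2).
  rewrite scalerDr (linearD iota) !(linearZZ iota) -e1 -e2 !scalerA; congr (_ + _).
    by rewrite mulrC.
move=> c x [d [H h]]; exists d; split => // a ha.
have [m e] := h a ha; exists (c *: m).
by rewrite scalerA mulrC -scalerA e (linearZZ iota).
Qed.

Lemma Mw_iota (M E : lmodType R) (iota : {linear M -> E}) m : Mw iota (iota m).
Proof.
exists [:: 1]; split; first exact: GV_1.
by move=> a _; exists (a *: m); rewrite (linearZZ iota).
Qed.


Lemma backward (M E : lmodType R) (iota : {linear M -> E}) :
  injective_envelope iota -> GV_torsionfree M -> w_projective iota ->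
  (exists es : seq R, GV es /\
     forall x : E, Mw iota x -> forall a : R, ideal_gen es a -> exists m : M, a *: x = iota m) ->
  w_split M.
Proof.
move=> env Mtf wproj [es [Hes hJ]].
have Etf := E_tf env Mtf; have iinj := env.1.
pose HMw := Mw_sub iota.
pose L := subm HMw.
pose phi := subval HMw.
have Ltf : GV_torsionfree L := tf_inj (phi := phi) val_inj Etf.
pose g' := ext (fun l : L => l).
have g's : forall l, exists b, g' b = l by move=> l; exists (bas R l); exact: ext_bas.
have Nw := ker_wmod g' Ltf.
have phiP : forall y, Mw iota y <-> exists l, phi l = y.
  move=> y; split.
    by move=> hy; exists (Subm (HP := HMw) (introT (pbP _ y) hy)).
  by case=> l <-; apply/(pbP HMw); exact: valP.
have [ds [Hds hl]] := wproj L phi val_inj phiP _ Nw.1 Nw _ _ _ (ker_exact g's).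
pose g := ext (fun m : M => m).
have gs : forall m, exists b, g b = m by move=> m; exists (bas R m); exact: ext_bas.
exists (subm (kerP g)), (Fr M R), (subval (kerP g)), g.
split; first exact: Fr_proj.
split; first exact: ker_exact.
exists (pl es ds); split; first exact: GV_mul.
move=> k; have [i [j ->]] := pl_nth k.
have [hj hjg] := hl j.
have Hmu (y : L) : exists m, es`_i *: val y = iota m.
  apply: hJ; last exact: ig_nth.
  by apply/(pbP HMw); exact: valP.
pose mu y := proj1_sig (constructive_indefinite_description _ (Hmu y)).
have hmu y : es`_i *: val y = iota (mu y) :=
  proj2_sig (constructive_indefinite_description _ (Hmu y)).
pose iL m : L := Subm (HP := HMw) (introT (pbP _ _) (Mw_iota iota m)).
have iLlin : linear iL.
  move=> c u v; apply: val_inj.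
  rewrite (linearP phi) /=; exact: (linearP iota).
pose Psi := ext (fun y : L => bas R (mu y)).
have hlin : linear (fun m => Psi (hj (mklin iLlin m))).
  by move=> c u v; rewrite !linearP.
exists (mklin hlin) => m; apply: iinj.
change (iota (g (Psi (hj (iL m)))) = iota ((es`_i * ds`_j) *: m)); set w := hj _.
rewrite ext_comp ext_comp.
rewrite (ext_eq (u' := fun y : L => es`_i *: phi y) w); last first.
  by move=> y; rewrite ext_bas hmu.
rewrite ext_scale -(ext_comp _ phi) hjg (linearZZ phi) (linearZZ iota) scalerA.
by [].
Qed.

End Bwd.

Local Close Scope fset_scope.

Theorem proposition2p9 (R : comPzRingType) (M E : lmodType R) (iota : {linear M -> E}) :
  injective_envelope iota -> GV_torsionfree M -> w_projective iota ->
  (w_split M <->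
   exists ds : seq R, GV ds /\
     forall x : E, Mw iota x -> forall a : R, ideal_gen ds a -> exists m : M, a *: x = iota m).
Proof.
move=> env Mtf wproj; split; first exact: forward.
exact: backward.
Qed.
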